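(* Let $k$ be a commutative ring and $H$ a $k$-bialgebra which is finitely generated projective as a $k$-module. Then $H$ is an FH-algebra if and only if the dual $H^*=\mathrm{Hom}_k(H,k)$ is an FH-algebra.
   Context: An FH-algebra over $k$ is a $k$-bialgebra $H$ which is a Frobenius algebra ($H$ finitely generated projective over $k$, with $f\in\mathrm{Hom}_k(H,k)$ and finitely many $x_i,y_i\in H$ such that $\sum_ix_if(y_ia)=a=\sum_if(ax_i)y_i$ for all $a$) whose Frobenius homomorphism $f$ can be chosen to be a right integral in $H^*$, i.e. $\sum f(a_1)a_2=f(a)1$ for all $a\in H$. $H^*$ is a bialgebra with convolution product $(gh)(x)=\sum g(x_1)h(x_2)$ and coproduct dual to the multiplication of $H$; $H^{**}$ is identified with $H$. *)

(* Defs.v *)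
From HB Require Import structures.
From mathcomp Require Import all_boot all_algebra.
Set Implicit Arguments. Unset Strict Implicit. Unset Printing Implicit Defensive.
Import GRing.Theory.
Local Open Scope ring_scope.

Definition klinear (k : comNzRingType) (M : lmodType k) (phi : M -> k) : Prop :=
  forall (a : k) (x y : M), phi (a *: x + y) = a * phi x + phi y.

(* M finitely generated projective over k (dual basis characterization) *)
Definition fgp (k : comNzRingType) (M : lmodType k) : Prop :=
  exists (n : nat) (e : 'I_n -> M) (g : 'I_n -> M -> k),
    (forall i, klinear (g i)) /\ forall x, x = \sum_(i < n) g i x *: e i.

(* An element of H (x) H is represented by a finite sum of pure tensors
   [:: (x_1,y_1); ...] meaning sum_i x_i (x) y_i.  tev phi psi t = (phi (x) psi)(t). *)
Definition tev (k : comNzRingType) (H : Type) (phi psi : H -> k) (t : seq (H * H)) : k :=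
  \sum_(p <- t) phi p.1 * psi p.2.

Definition conv (k : comNzRingType) (H : Type) (D : H -> seq (H * H))
  (phi psi : H -> k) : H -> k := fun a => tev phi psi (D a).

(* Equalities of tensors are tested against all phi (x) psi with
   phi, psi in H^*, which detects equality in H (x) H when H is f.g. projective. *)
Definition is_bialgebra (k : comNzRingType) (H : algType k)
  (D : H -> seq (H * H)) (eps : H -> k) : Prop :=
  [/\ klinear eps, eps 1 = 1 & forall a b : H, eps (a * b) = eps a * eps b] /\
  (forall phi psi, klinear phi -> klinear psi ->
     (forall (a : k) (x y : H),
        tev phi psi (D (a *: x + y)) = a * tev phi psi (D x) + tev phi psi (D y)) /\
     (forall a b : H, tev phi psi (D (a * b)) =
        \sum_(p <- D a) \sum_(q <- D b) phi (p.1 * q.1) * psi (p.2 * q.2)) /\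
     tev phi psi (D 1) = phi 1 * psi 1) /\
  (forall phi psi chi, klinear phi -> klinear psi -> klinear chi ->
     forall a : H, \sum_(p <- D a) tev phi psi (D p.1) * chi p.2 =
                   \sum_(p <- D a) phi p.1 * tev psi chi (D p.2)) /\
  (forall a : H, \sum_(p <- D a) eps p.1 *: p.2 = a /\
                 \sum_(p <- D a) eps p.2 *: p.1 = a).

Definition FH_algebra (k : comNzRingType) (H : algType k)
  (D : H -> seq (H * H)) (eps : H -> k) : Prop :=
  exists f : H -> k, klinear f /\
    (exists (n : nat) (x y : 'I_n -> H),
       forall a : H, \sum_(i < n) f (y i * a) *: x i = a /\
                     \sum_(i < n) f (a * x i) *: y i = a) /\
    (forall a : H, \sum_(p <- D a) f p.1 *: p.2 = f a *: 1).

(* H^* (convolution product, unit eps, coproduct dual to the multiplication of H,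
   counit chi |-> chi 1) is an FH-algebra.  The Frobenius homomorphism lies in
   H^** = H, i.e. is evaluation at some t in H; the right-integral condition
   sum F(chi_1) chi_2 = F(chi) eps, evaluated at a in H, reads
   sum chi_1(t) chi_2(a) = chi(t a) = chi(t) eps(a). *)
Definition FH_dual (k : comNzRingType) (H : algType k)
  (D : H -> seq (H * H)) (eps : H -> k) : Prop :=
  exists t : H,
    (exists (n : nat) (phi psi : 'I_n -> H -> k),
       (forall i, klinear (phi i) /\ klinear (psi i)) /\
       forall chi : H -> k, klinear chi -> forall a : H,
         \sum_(i < n) conv D (psi i) chi t * phi i a = chi a /\
         \sum_(i < n) conv D chi (phi i) t * psi i a = chi a) /\
    (forall chi : H -> k, klinear chi -> forall a : H, chi (t * a) = chi t * eps a).

(* Main.v *)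
Require Import Defs.
From mathcomp Require Import all_boot all_algebra.
From mathcomp Require Import ring.
Set Implicit Arguments. Unset Strict Implicit. Unset Printing Implicit Defensive.
Import GRing.Theory.
Local Open Scope ring_scope.

Section Lin.
Variables (k : comNzRingType) (H : algType k).

Definition hlin (L : H -> H) :=
  forall (a : k) (x y : H), L (a *: x + y) = a *: L x + L y.

Section KL.
Variable phi : H -> k.
Hypothesis L : klinear phi.
Lemma kl0 : phi 0 = 0.
Proof.
have := L 1 0 0; rewrite scaler0 addr0 mul1r.
by rewrite -{1}[phi 0]addr0 => /addrI.
Qed.
Lemma klD x y : phi (x + y) = phi x + phi y.
Proof. by have := L 1 x y; rewrite scale1r mul1r. Qed.
Lemma klZ a x : phi (a *: x) = a * phi x.
Proof. by have := L a x 0; rewrite !addr0 kl0 addr0. Qed.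
Lemma klN x : phi (- x) = - phi x.
Proof. by rewrite -scaleN1r klZ mulN1r. Qed.
Lemma klB x y : phi (x - y) = phi x - phi y.
Proof. by rewrite klD klN. Qed.
Lemma klsum I r (P : pred I) (F : I -> H) :
  phi (\sum_(i <- r | P i) F i) = \sum_(i <- r | P i) phi (F i).
Proof. exact: (big_morph phi klD kl0). Qed.
End KL.

Section HL.
Variable f : H -> H.
Hypothesis L : hlin f.
Lemma hl0 : f 0 = 0.
Proof.
have := L 1 0 0; rewrite scaler0 addr0 scale1r.
by rewrite -{1}[f 0]addr0 => /addrI.
Qed.
Lemma hlD x y : f (x + y) = f x + f y.
Proof. by have := L 1 x y; rewrite !scale1r. Qed.
Lemma hlZ a x : f (a *: x) = a *: f x.
Proof. by have := L a x 0; rewrite !addr0 hl0 addr0. Qed.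
Lemma hlN x : f (- x) = - f x.
Proof. by rewrite -scaleN1r hlZ scaleN1r. Qed.
Lemma hlsum I r (P : pred I) (F : I -> H) :
  f (\sum_(i <- r | P i) F i) = \sum_(i <- r | P i) f (F i).
Proof. exact: (big_morph f hlD hl0). Qed.
End HL.

Lemma kl_mull (phi : H -> k) c : klinear phi -> klinear (fun x => c * phi x).
Proof. by move=> L a x y; rewrite L mulrDr mulrCA. Qed.
Lemma kl_mulr (phi : H -> k) c : klinear phi -> klinear (fun x => phi x * c).
Proof. by move=> L a x y; rewrite L mulrDl mulrA. Qed.
Lemma kl_comp (phi : H -> k) (f : H -> H) :
  klinear phi -> hlin f -> klinear (fun x => phi (f x)).
Proof. by move=> L Lf a x y; rewrite Lf L. Qed.
Lemma kl_sum I (r : seq I) (F : I -> H -> k) :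
  (forall i, klinear (F i)) -> klinear (fun x => \sum_(i <- r) F i x).
Proof.
move=> L a x y; rewrite mulr_sumr -big_split /=.
by apply: eq_bigr => i _; rewrite L.
Qed.
Lemma kl_add (phi psi : H -> k) :
  klinear phi -> klinear psi -> klinear (fun x => phi x + psi x).
Proof. by move=> L1 L2 a x y; rewrite L1 L2 mulrDr addrACA. Qed.

Lemma hl_id : hlin id. Proof. by []. Qed.
Lemma hl_mull c : hlin (fun x => c * x).
Proof. by move=> a x y; rewrite mulrDr scalerAr. Qed.
Lemma hl_mulr c : hlin (fun x => x * c).
Proof. by move=> a x y; rewrite mulrDl scalerAl. Qed.
Lemma hl_comp (f g : H -> H) : hlin f -> hlin g -> hlin (fun x => f (g x)).
Proof. by move=> Lf Lg a x y; rewrite Lg Lf. Qed.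
Lemma hl_sum I (r : seq I) (F : I -> H -> H) :
  (forall i, hlin (F i)) -> hlin (fun x => \sum_(i <- r) F i x).
Proof.
move=> L a x y; rewrite scaler_sumr -big_split /=.
by apply: eq_bigr => i _; rewrite L.
Qed.
Lemma hl_scalk (phi : H -> k) v : klinear phi -> hlin (fun x => phi x *: v).
Proof. by move=> L a x y; rewrite L scalerDl scalerA. Qed.
Lemma hl_scalc c (f : H -> H) : hlin f -> hlin (fun x => c *: f x).
Proof. by move=> L a x y; rewrite L scalerDr !scalerA mulrC. Qed.

End Lin.
Section Bi.
Variables (k : comNzRingType) (H : algType k) (D : H -> seq (H * H)) (eps : H -> k).
Variables (n : nat) (e : 'I_n -> H) (g : 'I_n -> H -> k).
Hypothesis gL : forall i, klinear (g i).
Hypothesis ge : forall x, x = \sum_(i < n) g i x *: e i.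
Hypothesis HDZ : forall phi psi, klinear phi -> klinear psi ->
  forall (a : k) (x y : H),
    tev phi psi (D (a *: x + y)) = a * tev phi psi (D x) + tev phi psi (D y).
Hypothesis HDM : forall phi psi, klinear phi -> klinear psi ->
  forall a b : H, tev phi psi (D (a * b)) =
    \sum_(p <- D a) \sum_(q <- D b) phi (p.1 * q.1) * psi (p.2 * q.2).
Hypothesis HD1 : forall phi psi, klinear phi -> klinear psi ->
  tev phi psi (D 1) = phi 1 * psi 1.
Hypothesis Hco : forall phi psi chi, klinear phi -> klinear psi -> klinear chi ->
  forall a : H, \sum_(p <- D a) tev phi psi (D p.1) * chi p.2 =
                \sum_(p <- D a) phi p.1 * tev psi chi (D p.2).

Hypothesis epsL : klinear eps.
Hypothesis eps1 : eps 1 = 1.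
Hypothesis epsM : forall a b, eps (a * b) = eps a * eps b.
Hypothesis HcuL : forall a, \sum_(p <- D a) eps p.1 *: p.2 = a.
Hypothesis HcuR : forall a, \sum_(p <- D a) eps p.2 *: p.1 = a.

Lemma ext x y : (forall j, g j x = g j y) -> x = y.
Proof. by move=> E; rewrite (ge x) (ge y); apply: eq_bigr => j _; rewrite E. Qed.

Lemma expand (phi : H -> k) x : klinear phi -> phi x = \sum_(j < n) g j x * phi (e j).
Proof.
move=> L; rewrite {1}(ge x) (klsum L); apply: eq_bigr => j _; by rewrite (klZ L).
Qed.

Definition bil (h : H -> H -> k) :=
  (forall y, klinear (fun x => h x y)) /\ (forall x, klinear (h x)).
Definition tril (h : H -> H -> H -> k) :=
  [/\ (forall y z, klinear (fun x => h x y z)), (forall x z, klinear (fun y => h x y z))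
    & (forall x y, klinear (h x y))].

Lemma bil_expand h x y : bil h ->
  h x y = \sum_(j < n) \sum_(l < n) (g j x * g l y) * h (e j) (e l).
Proof.
case=> h1 h2; rewrite (expand x (h1 y)); apply: eq_bigr => j _.
rewrite (expand y (h2 (e j))) mulr_sumr; apply: eq_bigr => l _.
by rewrite !mulrA [g j x * _]mulrC.
Qed.

Lemma tril_expand h x y z : tril h ->
  h x y z = \sum_(j < n) \sum_(l < n) \sum_(m < n) (g j x * g l y * g m z) * h (e j) (e l) (e m).
Proof.
case=> h1 h2 h3; rewrite (expand x (h1 y z)); apply: eq_bigr => j _.
rewrite (expand y (h2 (e j) z)) mulr_sumr. apply: eq_bigr => l _.
rewrite (expand z (h3 (e j) (e l))) !mulr_sumr; apply: eq_bigr => m _.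
by rewrite !mulrA.
Qed.

Lemma sum_bil (s : seq (H * H)) h : bil h ->
  \sum_(p <- s) h p.1 p.2 = \sum_(j < n) \sum_(l < n) tev (g j) (g l) s * h (e j) (e l).
Proof.
move=> B.
under eq_bigr => p _ do rewrite (bil_expand p.1 p.2 B) /=.
rewrite exchange_big; apply: eq_bigr => j _.
rewrite exchange_big; apply: eq_bigr => l _.
by rewrite /tev mulr_suml.
Qed.

Lemma DZk h a x y : bil h ->
  \sum_(p <- D (a *: x + y)) h p.1 p.2 =
  a * \sum_(p <- D x) h p.1 p.2 + \sum_(p <- D y) h p.1 p.2.
Proof.
move=> B; rewrite !(sum_bil _ B) mulr_sumr -big_split; apply: eq_bigr => j _ /=.
rewrite mulr_sumr -big_split; apply: eq_bigr => l _ /=.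
by rewrite HDZ // mulrDl mulrA.
Qed.

Lemma D0k h : bil h -> \sum_(p <- D 0) h p.1 p.2 = 0.
Proof.
move=> B; have := DZk 1 0 0 B; rewrite scaler0 addr0 mul1r.
by rewrite -{1}[\sum_(p <- D 0) h p.1 p.2]addr0 => /addrI.
Qed.

Lemma DZk1 h a x : bil h ->
  \sum_(p <- D (a *: x)) h p.1 p.2 = a * \sum_(p <- D x) h p.1 p.2.
Proof. by move=> B; rewrite -[a *: x]addr0 DZk // D0k // addr0. Qed.

Lemma D1k h : bil h -> \sum_(p <- D 1) h p.1 p.2 = h 1 1.
Proof.
move=> B; rewrite (sum_bil _ B) (bil_expand 1 1 B); apply: eq_bigr => j _.
by apply: eq_bigr => l _; rewrite HD1.
Qed.

Lemma DMk h a b : bil h ->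
  \sum_(p <- D (a * b)) h p.1 p.2 =
  \sum_(p <- D a) \sum_(q <- D b) h (p.1 * q.1) (p.2 * q.2).
Proof.
move=> B; rewrite (sum_bil _ B).
under [RHS]eq_bigr => p _ do under eq_bigr => q _ do
  rewrite (bil_expand (p.1 * q.1) (p.2 * q.2) B).
under [RHS]eq_bigr => p _ do rewrite exchange_big.
rewrite [RHS]exchange_big; apply: eq_bigr => j _.
under [RHS]eq_bigr => p _ do rewrite exchange_big.
rewrite [RHS]exchange_big; apply: eq_bigr => l _ /=.
rewrite HDM // mulr_suml; apply: eq_bigr => p _.
by rewrite mulr_suml.
Qed.

Lemma pull3 (I : Type) (r : seq I) (F : I -> 'I_n -> 'I_n -> 'I_n -> k)
  (c : 'I_n -> 'I_n -> 'I_n -> k) :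
  \sum_(p <- r) \sum_(j < n) \sum_(l < n) \sum_(m < n) F p j l m * c j l m =
  \sum_(j < n) \sum_(l < n) \sum_(m < n) (\sum_(p <- r) F p j l m) * c j l m.
Proof.
rewrite exchange_big; apply: eq_bigr => j _.
rewrite exchange_big; apply: eq_bigr => l _.
rewrite exchange_big; apply: eq_bigr => m _.
by rewrite mulr_suml.
Qed.

Lemma coassk h a : tril h ->
  \sum_(p <- D a) \sum_(q <- D p.1) h q.1 q.2 p.2 =
  \sum_(p <- D a) \sum_(q <- D p.2) h p.1 q.1 q.2.
Proof.
move=> T.
transitivity (\sum_(j < n) \sum_(l < n) \sum_(m < n)
  (\sum_(p <- D a) tev (g j) (g l) (D p.1) * g m p.2) * h (e j) (e l) (e m)).
  rewrite -pull3; apply: eq_bigr => p _.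
  under eq_bigr => q _ do rewrite (tril_expand q.1 q.2 p.2 T).
  rewrite pull3; apply: eq_bigr => j _; apply: eq_bigr => l _; apply: eq_bigr => m _.
  by rewrite /tev mulr_suml.
transitivity (\sum_(j < n) \sum_(l < n) \sum_(m < n)
  (\sum_(p <- D a) g j p.1 * tev (g l) (g m) (D p.2)) * h (e j) (e l) (e m)).
  apply: eq_bigr => j _; apply: eq_bigr => l _; apply: eq_bigr => m _.
  by rewrite Hco.
rewrite -pull3; apply: eq_bigr => p _.
under [RHS]eq_bigr => q _ do rewrite (tril_expand p.1 q.1 q.2 T).
rewrite pull3; apply: eq_bigr => j _; apply: eq_bigr => l _; apply: eq_bigr => m _.
rewrite /tev mulr_sumr; congr (_ * _); apply: eq_bigr => q _.
by rewrite mulrA.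
Qed.

Definition bilH (h : H -> H -> H) :=
  (forall y, hlin (fun x => h x y)) /\ (forall x, hlin (h x)).
Definition trilH (h : H -> H -> H -> H) :=
  [/\ (forall y z, hlin (fun x => h x y z)), (forall x z, hlin (fun y => h x y z))
    & (forall x y, hlin (h x y))].

Lemma bilH_k m h : bilH h -> bil (fun x y => g m (h x y)).
Proof.
case=> h1 h2; split=> y; first exact: (kl_comp (gL m) (h1 y)).
exact: (kl_comp (gL m) (h2 y)).
Qed.

Lemma trilH_k m h : trilH h -> tril (fun x y z => g m (h x y z)).
Proof.
case=> h1 h2 h3; split=> [y z|x z|x y].
- exact: (kl_comp (gL m) (h1 y z)).
- exact: (kl_comp (gL m) (h2 x z)).
- exact: (kl_comp (gL m) (h3 x y)).
Qed.

Lemma DZh h a x y : bilH h ->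
  \sum_(p <- D (a *: x + y)) h p.1 p.2 =
  a *: \sum_(p <- D x) h p.1 p.2 + \sum_(p <- D y) h p.1 p.2.
Proof.
move=> B; apply: ext => m; rewrite (klD (gL m)) (klZ (gL m)) !(klsum (gL m)).
exact: (DZk _ _ _ (bilH_k m B)).
Qed.

Lemma DZh1 h a x : bilH h ->
  \sum_(p <- D (a *: x)) h p.1 p.2 = a *: \sum_(p <- D x) h p.1 p.2.
Proof.
move=> B; apply: ext => m; rewrite (klZ (gL m)) !(klsum (gL m)).
exact: (DZk1 _ _ (bilH_k m B)).
Qed.

Lemma D1h h : bilH h -> \sum_(p <- D 1) h p.1 p.2 = h 1 1.
Proof.
move=> B; apply: ext => m; rewrite !(klsum (gL m)).
exact: (D1k (bilH_k m B)).
Qed.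

Lemma DMh h a b : bilH h ->
  \sum_(p <- D (a * b)) h p.1 p.2 =
  \sum_(p <- D a) \sum_(q <- D b) h (p.1 * q.1) (p.2 * q.2).
Proof.
move=> B; apply: ext => m; rewrite !(klsum (gL m)).
under [RHS]eq_bigr => p _ do rewrite (klsum (gL m)).
exact: (DMk _ _ (bilH_k m B)).
Qed.

Lemma coassh h a : trilH h ->
  \sum_(p <- D a) \sum_(q <- D p.1) h q.1 q.2 p.2 =
  \sum_(p <- D a) \sum_(q <- D p.2) h p.1 q.1 q.2.
Proof.
move=> T; apply: ext => m; rewrite !(klsum (gL m)).
under eq_bigr => p _ do rewrite (klsum (gL m)).
under [RHS]eq_bigr => p _ do rewrite (klsum (gL m)).
exact: (coassk _ (trilH_k m T)).
Qed.

Lemma hl_Dsum h : bilH h -> hlin (fun x => \sum_(p <- D x) h p.1 p.2).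
Proof. by move=> B a x y; rewrite DZh. Qed.

Lemma bilH_fs (f : H -> k) : klinear f -> bilH (fun x y => f x *: y).
Proof.
move=> fL; split=> [y|x]; first exact: (hl_scalk y fL).
exact: (hl_scalc (f x) (@hl_id _ _)).
Qed.

Lemma bilH_sf (f : H -> k) : klinear f -> bilH (fun x y => f y *: x).
Proof.
move=> fL; split=> [y|x]; first exact: (hl_scalc (f y) (@hl_id _ _)).
exact: (hl_scalk x fL).
Qed.

Section Integral.
Variables (f : H -> k) (t : H).
Hypothesis fL : klinear f.
Hypothesis Fint : forall a, \sum_(p <- D a) f p.1 *: p.2 = f a *: 1.
Hypothesis tR : forall c, t * c = eps c *: t.
Hypothesis ft : forall c, f (t * c) = eps c.

Definition S c := \sum_(p <- D t) f (p.1 * c) *: p.2.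

Lemma SL : hlin S.
Proof.
apply: hl_sum => p; apply: hl_scalk; exact: (kl_comp fL (hl_mull p.1)).
Qed.

Lemma A1 c : \sum_(q <- D c) S q.1 * q.2 = eps c *: 1.
Proof.
have := Fint (t * c); rewrite ft (DMh _ _ (bilH_fs fL)) => <-.
rewrite exchange_big; apply: eq_bigr => q _.
rewrite /S mulr_suml; apply: eq_bigr => p _.
by rewrite -scalerAl.
Qed.

Section Fwd.
Variable t' : H.
Hypothesis t'L : forall c, c * t' = eps c *: t'.
Hypothesis ft' : forall c, f (c * t') = eps c.

Definition X c := \sum_(p <- D t') f (c * p.1) *: p.2.

Lemma XL : hlin X.
Proof.
apply: hl_sum => p; apply: hl_scalk; exact: (kl_comp fL (hl_mulr p.1)).
Qed.

Lemma A2 c : \sum_(q <- D c) q.2 * X q.1 = eps c *: 1.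
Proof.
have := Fint (c * t'); rewrite ft' (DMh _ _ (bilH_fs fL)) => <-.
apply: eq_bigr => q _.
rewrite /X mulr_sumr; apply: eq_bigr => p _.
by rewrite -scalerAr.
Qed.

Lemma XS a : X (S a) = a.
Proof.
have E1 : \sum_(q <- D a) \sum_(p <- D (q.2 * t')) f (S q.1 * p.1) *: p.2 = X (S a).
  under eq_bigr => q _ do
    rewrite t'L (DZh1 _ _ (bilH_fs (kl_comp fL (hl_mull (S q.1))))).
  rewrite -{2}[a]HcuR (hlsum SL) (hlsum XL); apply: eq_bigr => q _.
  by rewrite (hlZ SL) (hlZ XL).
rewrite -E1.
under eq_bigr => q _ do
  rewrite (DMh _ _ (bilH_fs (kl_comp fL (hl_mull (S q.1))))).
pose h3 u v w := \sum_(p <- D t') f (S u * (v * p.1)) *: (w * p.2).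
have T3 : trilH h3.
  split=> [y z|x z|x y].
  - apply: hl_sum => p; apply: hl_scalk.
    exact: (kl_comp fL (hl_comp (hl_mulr _) SL)).
  - apply: hl_sum => p; apply: hl_scalk.
    exact: (kl_comp fL (hl_comp (hl_mull (S x)) (hl_mulr p.1))).
  - apply: hl_sum => p; apply: hl_scalc; exact: hl_mulr.
rewrite [LHS](_ : _ = \sum_(q <- D a) \sum_(r <- D q.2) h3 q.1 r.1 r.2) //.
rewrite -(coassh a T3) /h3.
have K q p : \sum_(r <- D q) f (S r.1 * (r.2 * p)) = eps q * f p.
  rewrite -(klsum fL); under eq_bigr do rewrite mulrA.
  by rewrite -mulr_suml A1 -scalerAl mul1r (klZ fL).
under eq_bigr => q _ do rewrite exchange_big.
under eq_bigr => q _ do (under eq_bigr => p _ do rewrite -scaler_suml K).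
rewrite exchange_big.
transitivity (\sum_(p <- D t') f p.1 *: (a * p.2)).
  apply: eq_bigr => p _; rewrite -{2}[a]HcuL mulr_suml scaler_sumr.
  by apply: eq_bigr => q _; rewrite -scalerAl scalerA mulrC.
have ft1 : f t' = 1 by rewrite -[t']mul1r ft' eps1.
transitivity (a * \sum_(p <- D t') f p.1 *: p.2).
  by rewrite mulr_sumr; apply: eq_bigr => p _; rewrite scalerAr.
by rewrite Fint ft1 scale1r mulr1.
Qed.

Lemma SX a : S (X a) = a.
Proof.
have E1 : \sum_(q <- D a) \sum_(p <- D (t * q.2)) f (p.1 * X q.1) *: p.2 = S (X a).
  under eq_bigr => q _ do
    rewrite tR (DZh1 _ _ (bilH_fs (kl_comp fL (hl_mulr (X q.1))))).
  rewrite -{2}[a]HcuR (hlsum XL) (hlsum SL); apply: eq_bigr => q _.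
  by rewrite (hlZ XL) (hlZ SL).
rewrite -E1.
under eq_bigr => q _ do
  rewrite (DMh _ _ (bilH_fs (kl_comp fL (hl_mulr (X q.1))))) exchange_big.
pose h3 u v w := \sum_(p <- D t) f (p.1 * (v * X u)) *: (p.2 * w).
have T3 : trilH h3.
  split=> [y z|x z|x y].
  - apply: hl_sum => p; apply: hl_scalk.
    exact: (kl_comp fL (hl_comp (hl_mull p.1) (hl_comp (hl_mull y) XL))).
  - apply: hl_sum => p; apply: hl_scalk.
    exact: (kl_comp fL (hl_comp (hl_mull p.1) (hl_mulr (X x)))).
  - apply: hl_sum => p; apply: hl_scalc; exact: hl_mull.
rewrite [LHS](_ : _ = \sum_(q <- D a) \sum_(r <- D q.2) h3 q.1 r.1 r.2); last first.
  apply: eq_bigr => q _; apply: eq_bigr => r _; apply: eq_bigr => p _.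
  by rewrite /= mulrA.
rewrite -(coassh a T3) /h3.
have K q p : \sum_(r <- D q) f (p * (r.2 * X r.1)) = eps q * f p.
  by rewrite -(klsum fL) -mulr_sumr A2 -scalerAr mulr1 (klZ fL).
under eq_bigr => q _ do rewrite exchange_big.
under eq_bigr => q _ do (under eq_bigr => p _ do rewrite -scaler_suml K).
rewrite exchange_big.
transitivity (\sum_(p <- D t) f p.1 *: (p.2 * a)).
  apply: eq_bigr => p _; rewrite -{2}[a]HcuL mulr_sumr scaler_sumr.
  by apply: eq_bigr => q _; rewrite -scalerAr scalerA mulrC.
have ft1 : f t = 1 by rewrite -[t]mulr1 ft eps1.
transitivity ((\sum_(p <- D t) f p.1 *: p.2) * a).
  by rewrite mulr_suml; apply: eq_bigr => p _; rewrite scalerAl.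
by rewrite Fint ft1 scale1r mul1r.
Qed.

End Fwd.

Section Rev.
Variable f' : H -> k.
Hypothesis f'L : klinear f'.
Hypothesis Fint' : forall a, \sum_(p <- D a) f' p.2 *: p.1 = f' a *: 1.
Hypothesis f't : forall c, f' (t * c) = eps c.

Definition X' c := \sum_(p <- D t) f' (p.2 * c) *: p.1.

Lemma X'L : hlin X'.
Proof.
apply: hl_sum => p; apply: hl_scalk; exact: (kl_comp f'L (hl_mull p.2)).
Qed.

Lemma A2' c : \sum_(q <- D c) X' q.2 * q.1 = eps c *: 1.
Proof.
have := Fint' (t * c); rewrite f't (DMh _ _ (bilH_sf f'L)) => <-.
rewrite exchange_big; apply: eq_bigr => q _.
rewrite /X' mulr_suml; apply: eq_bigr => p _.
by rewrite -scalerAl.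
Qed.

Lemma star u v : \sum_(q <- D u) f' (q.2 * v) *: S q.1 =
                 \sum_(q <- D v) f' (u * q.2) *: q.1.
Proof.
pose h3 a b c := \sum_(s <- D v) f' (c * s.2) *: (S a * (b * s.1)).
have T3 : trilH h3.
  split=> [y z|x z|x y].
  - apply: hl_sum => p; apply: hl_scalc.
    exact: (hl_comp (hl_mulr _) SL).
  - apply: hl_sum => p; apply: hl_scalc.
    exact: (hl_comp (hl_mull (S x)) (hl_mulr p.1)).
  - apply: hl_sum => p; apply: hl_scalk.
    exact: (kl_comp f'L (hl_mulr p.2)).
transitivity (\sum_(q <- D u) \sum_(r <- D q.2) h3 q.1 r.1 r.2).
  apply: eq_bigr => q _.
  rewrite -[_ *: S q.1]mulr1 -scalerAl scalerAr -Fint' (DMh _ _ (bilH_sf f'L)).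
  rewrite mulr_sumr; apply: eq_bigr => r _.
  rewrite mulr_sumr; apply: eq_bigr => s _.
  by rewrite /= -scalerAr.
rewrite -(coassh u T3) /h3.
under eq_bigr => q _ do rewrite exchange_big.
have K q w : \sum_(r <- D q) S r.1 * (r.2 * w) = eps q *: w.
  under eq_bigr do rewrite mulrA.
  by rewrite -mulr_suml A1 -scalerAl mul1r.
under eq_bigr => q _ do (under eq_bigr => s _ do rewrite -scaler_sumr K).
rewrite exchange_big; apply: eq_bigr => s _.
rewrite -{2}[u]HcuL mulr_suml (klsum f'L) scaler_suml.
apply: eq_bigr => q _.
by rewrite scalerA -scalerAl (klZ f'L) mulrC.
Qed.

Lemma SX' a : S (X' a) = a.
Proof.
rewrite /X' (hlsum SL).
under eq_bigr do rewrite (hlZ SL).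
rewrite star -{2}[a]HcuR; apply: eq_bigr => q _.
by rewrite f't.
Qed.

Lemma dstar u v : \sum_(q <- D u) f (q.1 * v) *: X' q.2 =
                  \sum_(q <- D v) f (u * q.1) *: q.2.
Proof.
pose h3 a b c := \sum_(s <- D v) f (a * s.1) *: (X' c * (b * s.2)).
have T3 : trilH h3.
  split=> [y z|x z|x y].
  - apply: hl_sum => p; apply: hl_scalk.
    exact: (kl_comp fL (hl_mulr p.1)).
  - apply: hl_sum => p; apply: hl_scalc.
    exact: (hl_comp (hl_mull (X' z)) (hl_mulr p.2)).
  - apply: hl_sum => p; apply: hl_scalc.
    exact: (hl_comp (hl_mulr _) X'L).
transitivity (\sum_(q <- D u) \sum_(r <- D q.1) h3 r.1 r.2 q.2).
  apply: eq_bigr => q _.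
  rewrite -[_ *: X' q.2]mulr1 -scalerAl scalerAr -Fint (DMh _ _ (bilH_fs fL)).
  rewrite mulr_sumr; apply: eq_bigr => r _.
  rewrite mulr_sumr; apply: eq_bigr => s _.
  by rewrite /= -scalerAr.
rewrite (coassh u T3) /h3.
under eq_bigr => q _ do rewrite exchange_big.
have K q w : \sum_(r <- D q) X' r.2 * (r.1 * w) = eps q *: w.
  under eq_bigr do rewrite mulrA.
  by rewrite -mulr_suml A2' -scalerAl mul1r.
under eq_bigr => q _ do (under eq_bigr => s _ do rewrite -scaler_sumr K).
rewrite exchange_big; apply: eq_bigr => s _.
rewrite -{2}[u]HcuR mulr_suml (klsum fL) scaler_suml.
apply: eq_bigr => q _.
by rewrite scalerA -scalerAl (klZ fL) mulrC.
Qed.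

Lemma X'S a : X' (S a) = a.
Proof.
rewrite /S (hlsum X'L).
under eq_bigr do rewrite (hlZ X'L).
rewrite dstar -{2}[a]HcuL; apply: eq_bigr => q _.
by rewrite ft.
Qed.

End Rev.

End Integral.

Lemma fwd : FH_algebra D eps -> FH_dual D eps.
Proof.
case=> f [fL [[m [x [y Fr]]] Fint]].
pose t := \sum_(i < m) eps (x i) *: y i.
have ft c : f (t * c) = eps c.
  rewrite mulr_suml (klsum fL).
  under eq_bigr do rewrite -scalerAl (klZ fL).
  rewrite -{2}[c](Fr c).1 (klsum epsL); apply: eq_bigr => i _.
  by rewrite (klZ epsL) mulrC.
have tR c : t * c = eps c *: t.
  apply/eqP; rewrite -subr_eq0; apply/eqP.
  rewrite -[t * c - _](Fr _).2; apply: big1 => i _.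
  by rewrite mulrBl (klB fL) -mulrA ft -scalerAl (klZ fL) ft epsM subrr scale0r.
pose t' := \sum_(i < m) eps (y i) *: x i.
have ft' c : f (c * t') = eps c.
  rewrite mulr_sumr (klsum fL).
  under eq_bigr do rewrite -scalerAr (klZ fL).
  rewrite -{2}[c](Fr c).2 (klsum epsL); apply: eq_bigr => i _.
  by rewrite (klZ epsL) mulrC.
have t'L c : c * t' = eps c *: t'.
  apply/eqP; rewrite -subr_eq0; apply/eqP.
  rewrite -[c * t' - _](Fr _).1; apply: big1 => i _.
  by rewrite mulrBr (klB fL) mulrA ft' -scalerAr (klZ fL) ft' epsM [eps c * _]mulrC subrr scale0r.
have HS u chi : klinear chi -> tev (fun b => f (b * u)) chi (D t) = chi (S f t u).
  move=> Lc; rewrite /S (klsum Lc); apply: eq_bigr => p _.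
  by rewrite (klZ Lc).
exists t; split; last first.
  by move=> chi Lc a; rewrite tR (klZ Lc) mulrC.
exists n, (fun j => g j), (fun j b => f (b * X f t' (e j))); split.
  by move=> j; split; [exact: gL | exact: (kl_comp fL (hl_mulr _))].
move=> chi Lc a; split.
  rewrite [RHS](expand _ Lc); apply: eq_bigr => j _.
  rewrite /conv HS // SX // mulrC //.
pose c := \sum_(i < m) chi (y i) *: x i.
have chiE b : chi b = f (b * c).
  rewrite -{1}[b](Fr b).2 (klsum Lc) mulr_sumr (klsum fL); apply: eq_bigr => i _.
  by rewrite (klZ Lc) -scalerAr (klZ fL) mulrC.
have XL' : hlin (X f t') by apply: XL.
transitivity (\sum_(p <- D t) chi p.1 * f (a * X f t' p.2)).
  rewrite /conv /tev; under eq_bigr do rewrite mulr_suml.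
  rewrite exchange_big; apply: eq_bigr => p _.
  rewrite (expand p.2 (kl_comp fL (hl_comp (hl_mull a) XL'))) mulr_sumr.
  by apply: eq_bigr => j _; rewrite mulrA.
under eq_bigr do rewrite chiE.
transitivity (f (a * X f t' (S f t c))).
  rewrite /S (hlsum XL') mulr_sumr (klsum fL); apply: eq_bigr => p _.
  by rewrite (hlZ XL') -scalerAr (klZ fL).
by rewrite XS // chiE.
Qed.

Lemma klD_tev (phi psi : H -> k) : klinear phi -> klinear psi ->
  klinear (fun w => tev phi psi (D w)).
Proof. by move=> L1 L2 a x y; rewrite HDZ. Qed.

Lemma rev : FH_dual D eps -> FH_algebra D eps.
Proof.
case=> t [[N [phi [psi [Lpp R12]]]] Rint].
have phiL i : klinear (phi i) by case: (Lpp i).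
have psiL i : klinear (psi i) by case: (Lpp i).
have tR c : t * c = eps c *: t.
  by apply: ext => j; rewrite Rint // (klZ (gL j)) mulrC.
pose f b := \sum_(i < N) phi i 1 * psi i b.
pose f' b := \sum_(i < N) psi i 1 * phi i b.
have fL : klinear f by apply: kl_sum => i; apply: kl_mull.
have f'L : klinear f' by apply: kl_sum => i; apply: kl_mull.
have P1 chi : klinear chi -> \sum_(p <- D t) f p.1 * chi p.2 = chi 1.
  move=> Lc; rewrite -[RHS](R12 chi Lc 1).1 /conv /tev.
  under eq_bigr do rewrite mulr_suml.
  rewrite exchange_big; apply: eq_bigr => i _.
  rewrite mulr_suml; apply: eq_bigr => p _.
  by rewrite -mulrA mulrC.
have P1' chi : klinear chi -> \sum_(p <- D t) chi p.1 * f' p.2 = chi 1.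
  move=> Lc; rewrite -[RHS](R12 chi Lc 1).2 /conv /tev.
  under eq_bigr do rewrite mulr_sumr.
  rewrite exchange_big; apply: eq_bigr => i _.
  rewrite mulr_suml; apply: eq_bigr => p _.
  by rewrite mulrCA mulrC.
have ftt : f t = 1.
  rewrite -{1}[t]HcuR (klsum fL) -[RHS]eps1 -(P1 eps epsL).
  by apply: eq_bigr => p _; rewrite (klZ fL) mulrC.
have f'tt : f' t = 1.
  rewrite -{1}[t]HcuL (klsum f'L) -[RHS]eps1 -(P1' eps epsL).
  by apply: eq_bigr => p _; rewrite (klZ f'L).
have ft c : f (t * c) = eps c by rewrite tR (klZ fL) ftt mulr1.
have f't c : f' (t * c) = eps c by rewrite tR (klZ f'L) f'tt mulr1.
have IntF chi : klinear chi -> forall a,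
    \sum_(p <- D a) f p.1 * chi p.2 = f a * chi 1.
  move=> Lc a; pose z w := tev f chi (D w) - f w * chi 1.
  have Lz : klinear z.
    move=> c x y; rewrite /z HDZ // fL; ring.
  apply/eqP; rewrite -subr_eq0; apply/eqP.
  rewrite -[_ - _]/(z a) -[z a](R12 z Lz a).2; apply: big1 => i _.
  rewrite /conv /tev /z.
  under eq_bigr do rewrite mulrBl.
  rewrite sumrB (_ : \sum_(p <- D t) tev f chi (D p.1) * phi i p.2 = chi 1 * phi i 1).
    rewrite (_ : \sum_(p <- D t) f p.1 * chi 1 * phi i p.2 = chi 1 * phi i 1).
      by rewrite subrr mul0r.
    rewrite -(P1 _ (phiL i)) mulr_sumr; apply: eq_bigr => p _.
    by rewrite mulrCA mulrA.
  rewrite Hco // (P1 _ (klD_tev Lc (phiL i))) HD1 //.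
have IntF' chi : klinear chi -> forall a,
    \sum_(p <- D a) chi p.1 * f' p.2 = chi 1 * f' a.
  move=> Lc a; pose z w := tev chi f' (D w) - chi 1 * f' w.
  have Lz : klinear z.
    move=> c x y; rewrite /z HDZ // f'L; ring.
  apply/eqP; rewrite -subr_eq0; apply/eqP.
  rewrite -[_ - _]/(z a) -[z a](R12 z Lz a).1; apply: big1 => i _.
  rewrite /conv /tev /z.
  under eq_bigr do rewrite mulrBr.
  rewrite sumrB (_ : \sum_(p <- D t) psi i p.1 * tev chi f' (D p.2) = psi i 1 * chi 1).
    rewrite (_ : \sum_(p <- D t) psi i p.1 * (chi 1 * f' p.2) = psi i 1 * chi 1).
      by rewrite subrr mul0r.
    rewrite -(P1' _ (psiL i)) mulr_suml; apply: eq_bigr => p _.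
    by rewrite mulrCA mulrC.
  rewrite -Hco // (P1' _ (klD_tev (psiL i) Lc)) HD1 //.
have Fint a : \sum_(p <- D a) f p.1 *: p.2 = f a *: 1.
  apply: ext => j; rewrite (klsum (gL j)) (klZ (gL j)) -IntF //.
  by apply: eq_bigr => p _; rewrite (klZ (gL j)).
have Fint' a : \sum_(p <- D a) f' p.2 *: p.1 = f' a *: 1.
  apply: ext => j; rewrite (klsum (gL j)) (klZ (gL j)) mulrC -IntF' //.
  by apply: eq_bigr => p _; rewrite (klZ (gL j)) mulrC.
have X'L' : hlin (X' t f') by apply: X'L.
pose x j := X' t f' (e j).
pose y j := \sum_(p <- D t) g j p.2 *: p.1.
exists f; split; first exact: fL.
split; last exact: Fint.
exists n, x, y => a; split.
  transitivity (X' t f' (S f t a)); last by rewrite X'S.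
  rewrite (ge (S f t a)) (hlsum X'L'); apply: eq_bigr => j _.
  rewrite (hlZ X'L'); congr (_ *: _).
  rewrite /y mulr_suml (klsum fL) /S (klsum (gL j)); apply: eq_bigr => p _.
  by rewrite -scalerAl (klZ fL) (klZ (gL j)) mulrC.
pose ca b := \sum_(i < N) psi i a * phi i b.
have caL : klinear ca by apply: kl_sum => i; apply: kl_mull.
have Pa : \sum_(p <- D t) ca p.2 *: p.1 = a.
  apply: ext => l; rewrite (klsum (gL l)) -(R12 (g l) (gL l) a).2 /conv /tev.
  under eq_bigr do rewrite (klZ (gL l)) mulr_suml.
  rewrite exchange_big; apply: eq_bigr => i _.
  rewrite mulr_suml; apply: eq_bigr => p _.
  by ring.
have fE b : f (a * b) = ca (S f t b).
  rewrite -{1}Pa mulr_suml (klsum fL) /S (klsum caL); apply: eq_bigr => p _.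
  by rewrite -scalerAl (klZ fL) (klZ caL) mulrC.
have E j : f (a * x j) = ca (e j) by rewrite fE SX'.
transitivity (\sum_(p <- D t) ca p.2 *: p.1); last exact: Pa.
under eq_bigr do rewrite E /y scaler_sumr.
rewrite exchange_big; apply: eq_bigr => p _.
rewrite (expand p.2 caL) scaler_suml; apply: eq_bigr => j _.
by rewrite scalerA mulrC.
Qed.

End Bi.

Theorem mainTheorem17 (k : comNzRingType) (H : algType k)
  (D : H -> seq (H * H)) (eps : H -> k) :
  fgp H -> is_bialgebra D eps ->
  (FH_algebra D eps <-> FH_dual D eps).
Proof.
case=> n [e [g [gL ge]]] [[epsL eps1 epsM] [Hbi [Hco Hcu]]].
have HDZ phi psi (Lp : klinear phi) (Ls : klinear psi) := (Hbi phi psi Lp Ls).1.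
have HDM phi psi (Lp : klinear phi) (Ls : klinear psi) := (Hbi phi psi Lp Ls).2.1.
have HD1 phi psi (Lp : klinear phi) (Ls : klinear psi) := (Hbi phi psi Lp Ls).2.2.
have HcuL a := (Hcu a).1.
have HcuR a := (Hcu a).2.
split.
  by eapply fwd; eassumption.
by eapply rev; eassumption.
Qed.
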